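(* For $j \geq 0$, define $t_{2j} = (ca)^j$ and $t_{2j+1} = a(ca)^j$. Let $k_i$ denote the $i$-th row in the matrix $K$. Then $k_i = t_i(k_0)$.
   Context: Let $X_3=\{0,1,2\}$. Define matrices $K_n$ of size $3^n \times n$ with entries in $X_3$ recursively by \[ K_1 = \begin{bmatrix} 0 \\ 1 \\ 2 \end{bmatrix}, \qquad K_{n+1} = \begin{bmatrix} K_n & 0_n \\ K_n^R & 1_n \\ K_n & 2_n \end{bmatrix}, \] where $K_n^R$ is obtained from $K_n$ by reversing the order of its rows, and $0_n$, $1_n$, $2_n$ are column vectors with $3^n$ entries all equal to $0$, $1$, $2$ respectively. Since $K_n$ is the upper left corner of $K_{n+1}$, the infinite limit matrix $K=\lim_{n\to\infty} K_n$ is well defined; rows are indexed starting from $0$, and each row is regarded as an infinite word over $X_3$ ending in $0^\infty$ (so $k_0 = 0^\infty$). The maps $a$ and $c$ are the ternary tree automorphisms (acting on finite and infinite words over $X_3$) defined recursively for $\{i,j\}=\{0,1\}$ (for $a$) and $\{i,j\}=\{1,2\}$ (for $c$) by: $a_{ij}(\emptyset)=\emptyset$, $a_{ij}(iw)=jw$, $a_{ij}(jw)=iw$, $a_{ij}(xw)=x\,a_{ij}(w)$ for $x\notin\{i,j\}$; i.e. $a=a_{01}$ changes the first occurrence of $0$ or $1$ in a word to the other symbol, and $c=a_{12}$ changes the first occurrence of $1$ or $2$ to the other symbol. Composition is from right to left. *)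

(* Defs.v *)
From mathcomp Require Import all_boot.
Set Implicit Arguments. Unset Strict Implicit. Unset Printing Implicit Defensive.

(* Letters of X_3 = {0,1,2} are represented as natural numbers; all words
   below only ever take values in {0,1,2}.
   An infinite word over X_3 is a function nat -> nat (position -> letter). *)
Definition word := nat -> nat.

(* Entry (r, j) of K_n (0-indexed row r < 3^n, column j < n), following the
   recursion K_{n+1} = [K_n 0_n ; K_n^R 1_n ; K_n 2_n]. *)
Fixpoint Kn (n : nat) (r j : nat) : nat :=
  match n with
  | 0 => 0
  | m.+1 =>
      if j == m then r %/ 3 ^ m
      else if r %/ 3 ^ m == 1 then Kn m (3 ^ m - 1 - r %% 3 ^ m) j
      else Kn m (r %% 3 ^ m) j
  end.
(* Note: K_1 = [0;1;2] is the instance n = 0 of the recursion (K_0 has 1 row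
   and no columns), and Kn 1 r 0 = r for r < 3. *)

(* Entry (r, j) of the limit matrix K: K_N for N large enough (N > j and
   3^N > r); the infinite row k_r is padded with 0^infinity, which is what
   K_N gives at columns j with 3^j > r. *)
Definition Kentry (r j : nat) : nat := Kn (r + j + 1) r j.

Definition krow (i : nat) : word := fun j => Kentry i j.

(* a_{ij}: swap the first occurrence of i or j (identity if none occurs). *)
Definition aswap (x y : nat) (w : word) : word := fun n =>
  if has (fun m => (w m == x) || (w m == y)) (iota 0 n) then w n
  else if w n == x then y else if w n == y then x else w n.

Definition a_aut : word -> word := aswap 0 1.
Definition c_aut : word -> word := aswap 1 2.

Definition t_aut (i : nat) (w : word) : word :=
  let v := iter i./2 (fun u => c_aut (a_aut u)) w in
  if odd i then a_aut v else v.

(* Main.v *)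
Require Import Defs.
From mathcomp Require Import all_boot.
From mathcomp Require Import zify.
Set Implicit Arguments. Unset Strict Implicit. Unset Printing Implicit Defensive.

Definition f (q : nat) : nat := if odd (q %/ 3) then 2 - q %% 3 else q %% 3.
Definition G (r j : nat) : nat := f (r %/ 3 ^ j).

Lemma fE q d : d < 3 -> f (q * 3 + d) = if odd q then 2 - d else d.
Proof.
move=> Hd; rewrite /f divnMDl // modnMDl (divn_small Hd) (modn_small Hd) addn0 //.
Qed.

Lemma G0 q d : d < 3 -> G (q * 3 + d) 0 = if odd q then 2 - d else d.
Proof. by move=> Hd; rewrite /G expn0 divn1 fE. Qed.

Lemma GS q d n : d < 3 -> G (q * 3 + d) n.+1 = G q n.
Proof.
move=> Hd; rewrite /G expnS divnMA divnMDl // (divn_small Hd) addn0 //.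
Qed.

Lemma aswap_ext x y w v n : (forall k, w k = v k) -> aswap x y w n = aswap x y v n.
Proof.
move=> E; rewrite /aswap !E; congr (if _ then _ else _).
by apply: eq_has => k; rewrite !E.
Qed.

Lemma aswapS x y w n : aswap x y w n.+1 =
  if (w 0 == x) || (w 0 == y) then w n.+1 else aswap x y (fun k => w k.+1) n.
Proof.
rewrite /aswap /= -(addn0 1) iotaDl has_map /=.
by case: ((w 0 == x) || (w 0 == y)).
Qed.

Lemma aswap0 x y w : aswap x y w 0 =
  if w 0 == x then y else if w 0 == y then x else w 0.
Proof. by []. Qed.

Lemma step n : forall r, G r.+1 n =
  aswap (if odd r then 1 else 0) (if odd r then 2 else 1) (G r) n.
Proof.
elim: n => [|n IH] r.
  rewrite aswap0 (divn_eq r 3); move: (ltn_pmod r (isT : 0 < 3)).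
  move: (r %/ 3) (r %% 3) => q d Hd.
  rewrite oddD oddM /= G0 //.
  case: d Hd => [|[|[|d]]] // _.
  - by rewrite (_ : (q * 3 + 0).+1 = q * 3 + 1) ?G0 //; [case: (odd q)|lia].
  - by rewrite (_ : (q * 3 + 1).+1 = q * 3 + 2) ?G0 //; [case: (odd q)|lia].
  - have -> : (q * 3 + 2).+1 = q.+1 * 3 + 0 by rewrite mulSn; lia.
    by rewrite G0 //=; case: (odd q).
rewrite aswapS (divn_eq r 3); move: (ltn_pmod r (isT : 0 < 3)).
move: (r %/ 3) (r %% 3) => q d Hd.
rewrite oddD oddM /= G0 // GS //.
case: d Hd => [|[|[|d]]] // _.
- by rewrite (_ : (q * 3 + 0).+1 = q * 3 + 1) ?GS //; [case: (odd q)|lia].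
- by rewrite (_ : (q * 3 + 1).+1 = q * 3 + 2) ?GS //; [case: (odd q)|lia].
- have -> : (q * 3 + 2).+1 = q.+1 * 3 + 0 by rewrite mulSn; lia.
  rewrite GS // IH /=.
  by case: (odd q) => /=; apply: aswap_ext => k; rewrite GS.
Qed.

Lemma fB k u : f (3 ^ k.+1 + u) = 2 - f u.
Proof.
have H3 := ltn_mod u 3.
have -> : 3 ^ k.+1 + u = (3 ^ k + u %/ 3) * 3 + u %% 3
  by rewrite expnS {1}(divn_eq u 3); lia.
rewrite fE // oddD oddX orbT /= /f.
by case: (odd (u %/ 3)) => /=; lia.
Qed.

Lemma fC k u : f (2 * 3 ^ k.+1 + u) = f u.
Proof.
have H3 := ltn_mod u 3.
have -> : 2 * 3 ^ k.+1 + u = (2 * 3 ^ k + u %/ 3) * 3 + u %% 3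
  by rewrite expnS {1}(divn_eq u 3); lia.
rewrite fE // oddD oddM /= /f.
by case: (odd (u %/ 3)).
Qed.

Lemma fA k u : u < 3 ^ k.+1 -> f (3 ^ k.+1 - 1 - u) = 2 - f u.
Proof.
move=> Hu.
have H3 := ltn_mod u 3.
have Eu := divn_eq u 3.
have Ha : u %/ 3 < 3 ^ k.
  by rewrite ltn_divLR // -expnSr.
have -> : 3 ^ k.+1 - 1 - u = (3 ^ k - 1 - u %/ 3) * 3 + (2 - u %% 3)
  by rewrite expnS; lia.
rewrite fE; last by lia.
have -> : odd (3 ^ k - 1 - u %/ 3) = odd (u %/ 3).
  rewrite -subnDA oddB; last by lia.
  by rewrite oddX orbT oddD /=; case: (odd _).
rewrite /f; by case: (odd (u %/ 3)) => /=; lia.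
Qed.

Lemma GB j k s : G (3 ^ (j + k.+1) + s) j = 2 - G s j.
Proof.
by rewrite /G expnD (mulnC (3 ^ j)) divnMDl ?expn_gt0 // fB.
Qed.

Lemma GC j k s : G (2 * 3 ^ (j + k.+1) + s) j = G s j.
Proof.
by rewrite /G expnD (mulnC (3 ^ j)) mulnA divnMDl ?expn_gt0 // fC.
Qed.

Lemma GA j k s : s < 3 ^ (j + k.+1) -> G (3 ^ (j + k.+1) - 1 - s) j = 2 - G s j.
Proof.
rewrite /G expnD (mulnC (3 ^ j)) => Hs.
have P0 : 0 < 3 ^ j := expn_gt0 _ _.
move: (3 ^ j) (3 ^ k.+1) P0 Hs (@fA k (s %/ 3 ^ j)) => P X P0 Hs HA.
have Es := divn_eq s P.
have Hb := ltn_pmod s P0.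
move: (s %/ P) (s %% P) Es Hb HA => a b Es Hb HA.
have Ha : a < X.
  rewrite -(ltn_pmul2r P0); lia.
have E1 : (X - 1 - a) * P = X * P - P - a * P by rewrite !mulnBl mul1n.
have E2 : a.+1 * P <= X * P by rewrite leq_mul2r Ha orbT.
have -> : X * P - 1 - s = (X - 1 - a) * P + (P - 1 - b).
  rewrite E1; rewrite mulSn in E2; lia.
rewrite divnMDl // divn_small; last by lia.
rewrite addn0 HA // Es divnMDl // (divn_small Hb) addn0 //.
Qed.

Lemma Kn_G N : forall r j, j < N -> r < 3 ^ N -> Kn N r j = G r j.
Proof.
elim: N => [|m IH] r j //= Hj Hr.
have P0 : 0 < 3 ^ m := expn_gt0 _ _.
case: eqP => [->|Hjm].
  have : r %/ 3 ^ m < 3 by rewrite ltn_divLR // -expnS.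
  rewrite /G /f.
  by case: (r %/ 3 ^ m) => [|[|[|]]].
have Hjm' : j < m by lia.
have Er := divn_eq r (3 ^ m).
have Hs := ltn_pmod r P0.
have Hq : r %/ 3 ^ m < 3 by rewrite ltn_divLR // -expnS.
rewrite [in G r j]Er.
move: (r %/ 3 ^ m) (r %% 3 ^ m) Hq Hs => q s Hq Hs.
have [k Ek] : exists k, m = j + k.+1 by exists (m - j.+1); lia.
case: q Hq => [|[|[|q]]] // _ /=.
- by rewrite mul0n add0n IH.
- rewrite mul1n IH //; last by lia.
  by rewrite Ek GA ?GB // -Ek.
- by rewrite IH // Ek GC.
Qed.

Lemma Kentry_G r j : Kentry r j = G r j.
Proof.
rewrite /Kentry Kn_G //; first by lia.
apply: leq_trans (ltn_expl r (isT : 1 < 3)) _.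
by apply: leq_pexp2l => //; lia.
Qed.

Lemma t_autS i w : t_aut i.+1 w =
  (if odd i then c_aut else a_aut) (t_aut i w).
Proof.
rewrite /t_aut /=.
rewrite uphalf_half.
by case: (odd i).
Qed.

Theorem mainTheorem9 (i : nat) :
  forall n : nat, krow i n = t_aut i (krow 0) n.
Proof.
elim: i => [|i IH] n //.
rewrite t_autS /krow Kentry_G step.
case: (odd i) => /=; rewrite /c_aut /a_aut; apply: aswap_ext => k;
  by rewrite -Kentry_G; exact: IH.
Qed.
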